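(* Let $G$ be a group, $A\subseteq G$ a finite set, $N>0$ a real number and $\epsilon\in(0,1)$. Suppose $X\subseteq\operatorname{Stab}^r_N(A)$ is finite and nonempty. Then $|Z^\ell_\epsilon(A,X)|\leq 2N/\epsilon$. In particular, if $X\subseteq\operatorname{St}^r_{\epsilon^2/2}(A)$ is finite and nonempty, then $|Z^\ell_\epsilon(A,X)|\leq\epsilon|A|$.
   Context: $\operatorname{Stab}^r_N(A)=\{x\in G:|Ax\triangle A|\leq N\}$ ($\triangle$ symmetric difference) and $\operatorname{St}^r_\eta(A)=\operatorname{Stab}^r_{\eta|A|}(A)$. For finite $A,X\subseteq G$, $Z^\ell_\epsilon(A,X)=\{g\in G:\min\{|gX\cap A|,|gX\setminus A|\}\geq\epsilon|X|\}$. *)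

(* Defs.v *)
From HB Require Import structures.
From mathcomp Require Import all_boot all_order all_algebra.
From mathcomp Require Import finmap.
Set Implicit Arguments. Unset Strict Implicit. Unset Printing Implicit Defensive.
Import Order.TTheory GRing.Theory Num.Theory.

(* A possibly infinite group G is a [groupType] (mathcomp/boot/monoid.v);
   finite subsets of G are [{fset G}]. *)

Local Open Scope fset_scope.

Definition rtrans (G : groupType) (A : {fset G}) (x : G) : {fset G} :=
  [fset (a * x)%g | a in A].

Definition ltrans (G : groupType) (g : G) (X : {fset G}) : {fset G} :=
  [fset (g * x)%g | x in X].

Definition fsymdiff (T : choiceType) (A B : {fset T}) : {fset T} :=
  (A `\` B) `|` (B `\` A).

Definition Stab_r (R : realFieldType) (G : groupType) (N : R) (A : {fset G})
  : G -> Prop :=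
  fun x => ((#|` fsymdiff (rtrans A x) A|)%:R <= N)%R.

Definition St_r (R : realFieldType) (G : groupType) (eta : R) (A : {fset G})
  : G -> Prop :=
  Stab_r (eta * (#|` A|)%:R)%R A.

Definition Z_l (R : realFieldType) (G : groupType) (eps : R) (A X : {fset G})
  : G -> Prop :=
  fun g => (eps * (#|` X|)%:R <=
            (minn #|` ltrans g X `&` A| #|` ltrans g X `\` A|)%:R)%R.

(* Main.v *)
Require Import Defs.
From HB Require Import structures.
From mathcomp Require Import all_boot all_order all_algebra.
From mathcomp Require Import finmap.
From mathcomp Require Import zify ring lra.
Import Order.TTheory GRing.Theory Num.Theory.
Local Open Scope fset_scope.

Section H.
Variable G : groupType.
Implicit Types A B C S X : {fset G}.



Lemma cardI_sum B C : #|` B `&` C| = (\sum_(b <- B) (b \in C))%N.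
Proof.
have -> : B `&` C = [fset b in B | b \in C] by apply/fsetP => z; rewrite !inE.
by rewrite card_fset_sum1 big_fset /= big_mkcond.
Qed.

Lemma cardD_sum B C : #|` B `\` C| = (\sum_(b <- B) (b \notin C))%N.
Proof.
have -> : B `\` C = [fset b in B | b \notin C] by apply/fsetP => z; rewrite !inE andbC.
by rewrite card_fset_sum1 big_fset /= big_mkcond.
Qed.

Lemma sum_ltrans (g : G) X (F : G -> nat) :
  (\sum_(z <- ltrans g X) F z = \sum_(x <- X) F (g * x)%g)%N.
Proof. by rewrite /ltrans big_imfset //= => x y _ _; apply: mulgI. Qed.

Lemma sum_rtrans A (x : G) (F : G -> nat) :
  (\sum_(z <- rtrans A x) F z = \sum_(a <- A) F (a * x)%g)%N.
Proof. by rewrite /rtrans big_imfset //= => a b _ _; apply: mulIg. Qed.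

Lemma in_rtrans A x a : (a \in rtrans A x) = (a * x^-1 \in A)%g.
Proof.
apply/imfsetP/idP => [[b bA ->]|aA]; first by rewrite mulgK.
by exists (a * x^-1)%g => //; rewrite mulgVK.
Qed.

Lemma card_rtrans A x : #|` rtrans A x| = #|` A|.
Proof. by rewrite !card_fset_sum1 sum_rtrans. Qed.

Lemma sum_sub_fset (s : seq G) A (F : G -> nat) : uniq s ->
  (\sum_(i <- s | i \in A) F i <= \sum_(i <- A) F i)%N.
Proof.
move=> us; rewrite -big_filter.
apply: (uniq_sub_le_big (op := addn) (le := leq) leqnn (fun x y => leq_addr y x)); rewrite ?filter_uniq ?fset_uniq //.
by move=> i; rewrite mem_filter => /andP[].
Qed.


Lemma card_symdiff B C : #|` fsymdiff B C| = (#|` B `\` C| + #|` C `\` B|)%N.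
Proof.
rewrite /fsymdiff; have := cardfsUI (B `\` C) (C `\` B).
have -> : (B `\` C) `&` (C `\` B) = fset0.
  by apply/fsetP => z; rewrite !inE; case: (z \in B); case: (z \in C).
by rewrite cardfs0 addn0.
Qed.

Definition Ef A (x : G) := (\sum_(a <- A) (a * x^-1 \notin A)%g)%N.
Definition Ff A (x : G) := (\sum_(a <- A) (a * x \notin A)%g)%N.

Lemma Ff_card A x : Ff A x = #|` rtrans A x `\` A|.
Proof. by rewrite cardD_sum sum_rtrans. Qed.

Lemma Ef_card A x : Ef A x = #|` A `\` rtrans A x|.
Proof. by rewrite /Ef cardD_sum; apply: eq_bigr => a _; rewrite in_rtrans. Qed.

Lemma Ef_Ff A x : Ef A x = Ff A x.
Proof. by rewrite Ef_card Ff_card !cardfsD fsetIC card_rtrans. Qed.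

Lemma EF_symdiff A x : (Ef A x + Ff A x)%N = #|` fsymdiff (rtrans A x) A|.
Proof. by rewrite card_symdiff Ef_card Ff_card addnC. Qed.

Lemma sum_cond_and (s : seq G) (P Q : pred G) :
  (\sum_(i <- s) (P i && Q i) = \sum_(i <- s | P i) Q i)%N.
Proof. by rewrite [RHS]big_mkcond; apply: eq_bigr => i _; case: (P i). Qed.

Lemma pair_bound A S (x y : G) :
  (\sum_(g <- S) ((g * x \in A) && (g * y \notin A))%g <= Ef A x + Ff A y)%N.
Proof.
have -> : (\sum_(g <- S) ((g * x \in A) && (g * y \notin A))%g =
   \sum_(h <- rtrans S x) ((h \in A) && (h * (x^-1 * y) \notin A))%g)%N.
  by rewrite sum_rtrans; apply: eq_bigr => g _; rewrite mulgA mulgK.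
rewrite sum_cond_and.
apply: leq_trans (sum_sub_fset _ _ _ (fset_uniq _)) _.
apply: leq_trans (_ : \sum_(h <- A) ((h * x^-1 \notin A) +
   ((h * x^-1 \in A) && (h * x^-1 * y \notin A)))%g <= _)%N.
  apply: leq_sum => h _; rewrite mulgA.
  by case: (h * x^-1 \in A)%g => //=; case: (_ \notin A).
rewrite big_split /= leq_add2l.
have -> : (\sum_(h <- A) ((h * x^-1 \in A) && (h * x^-1 * y \notin A))%g =
   \sum_(c <- rtrans A x^-1) ((c \in A) && (c * y \notin A))%g)%N.
  by rewrite sum_rtrans.
by rewrite sum_cond_and sum_sub_fset ?fset_uniq.
Qed.

Definition pf A X (g : G) := (\sum_(x <- X) (g * x \in A)%g)%N.
Definition qf A X (g : G) := (\sum_(x <- X) (g * x \notin A)%g)%N.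

Lemma card_ltI A X g : #|` ltrans g X `&` A| = pf A X g.
Proof. by rewrite cardI_sum sum_ltrans. Qed.

Lemma card_ltD A X g : #|` ltrans g X `\` A| = qf A X g.
Proof. by rewrite cardD_sum sum_ltrans. Qed.

Lemma pq_sum A X g : (pf A X g + qf A X g)%N = #|` X|.
Proof.
by rewrite card_fset_sum1 -big_split; apply: eq_bigr => x _; case: (_ \in A).
Qed.

Lemma min_bound p q : (minn p q * (p + q) <= 2 * (p * q))%N.
Proof. case: (leqP p q) => h; nia. Qed.

Lemma pq_prod A X g : (pf A X g * qf A X g)%N =
  (\sum_(x <- X) \sum_(y <- X) ((g * x \in A) && (g * y \notin A))%g)%N.
Proof.
rewrite /pf /qf big_distrl /=; apply: eq_bigr => x _.
by rewrite big_distrr /=; apply: eq_bigr => y _; rewrite mulnb.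
Qed.

Lemma main_nat A X S :
  (\sum_(g <- S) minn (pf A X g) (qf A X g) * #|` X| <=
   \sum_(x <- X) \sum_(y <- X)
     (#|` fsymdiff (rtrans A x) A| + #|` fsymdiff (rtrans A y) A|))%N.
Proof.
apply: (@leq_trans (\sum_(g <- S) 2 * (pf A X g * qf A X g))%N).
  by apply: leq_sum => g _; rewrite -(pq_sum A X g) min_bound.
rewrite -big_distrr /=.
under eq_bigr do rewrite pq_prod.
rewrite exchange_big /=.
under eq_bigr do rewrite exchange_big /=.
rewrite big_distrr; apply: leq_sum => x _.
rewrite big_distrr; apply: leq_sum => y _.
have := pair_bound A S x y.
rewrite -!EF_symdiff !Ef_Ff => h; apply: leq_trans (leq_mul (leqnn 2) h) _; lia.
Qed.

End H.


Arguments pf {G}. Arguments qf {G}. Arguments main_nat {G}.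
Section Real.
Local Open Scope ring_scope.

Lemma sum_const_fset (R : realFieldType) (G : groupType) (X : {fset G}) (c : R) :
  \sum_(x <- X) c = (#|` X|)%:R * c.
Proof.
by rewrite card_fset_sum1 natr_sum mulr_suml; apply: eq_bigr => x _; rewrite mul1r.
Qed.

Lemma main_gen (R : realFieldType) (G : groupType) (A : {fset G}) (N eps : R)
  (X : {fset G}) : 0 < eps -> X != fset0 -> (forall x, x \in X -> Stab_r N A x) ->
  exists S : {fset G}, (forall g, g \in S <-> Z_l eps A X g) /\
                       (#|` S|)%:R <= 2 * N / eps.
Proof.
move=> eps0 X0 HX.
pose zb (g : G) := (eps * (#|` X|)%:R <=
   (minn #|` ltrans g X `&` A| #|` ltrans g X `\` A|)%:R).
pose T := [fset (a * x^-1)%g | a in A, x in X].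
pose S := [fset g in T | zb g].
have n0 : (0 < #|` X|)%N by rewrite cardfs_gt0.
have zbT g : zb g -> g \in T.
  rewrite /zb => hz.
  have : (0 < #|` ltrans g X `&` A|)%N.
    have : 0 < (minn #|` ltrans g X `&` A| #|` ltrans g X `\` A|)%:R :> R.
      by apply: lt_le_trans hz; rewrite mulr_gt0 // ltr0n.
    rewrite ltr0n => /leq_trans; apply; exact: geq_minl.
  rewrite cardfs_gt0 => /fset0Pn [z]; rewrite inE => /andP[/imfsetP [x xX ->] gxA].
  by apply/imfset2P; exists (g * x)%g => //; exists x => //; rewrite mulgK.
exists S; split.
  move=> g; rewrite /S inE /=; split; first by case/andP.
  by move=> hz; apply/andP; split => //; exact: zbT.
have key g : g \in S -> eps * (#|` X|)%:R <= (minn (pf A X g) (qf A X g))%:R.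
  by rewrite inE /= => /andP[_]; rewrite /zb card_ltI card_ltD.
have Hn := main_nat A X S.
set n := #|` X| in n0 key Hn *.
have npos : 0 < n%:R :> R by rewrite ltr0n.
have H1 : (#|` S|)%:R * eps * n%:R * n%:R <=
   (\sum_(g <- S) minn (pf A X g) (qf A X g) * n)%:R.
  rewrite natr_sum card_fset_sum1 natr_sum !mulr_suml big_seq [X in _ <= X]big_seq; apply: ler_sum => g gS.
  by rewrite mul1r natrM ler_wpM2r ?ler0n // key.
have H2 : (\sum_(x <- X) \sum_(y <- X)
     (#|` fsymdiff (rtrans A x) A| + #|` fsymdiff (rtrans A y) A|))%:R
   <= n%:R * n%:R * (2 * N).
  rewrite natr_sum -mulrA -sum_const_fset big_seq [X in _ <= X]big_seq.
  apply: ler_sum => x xX.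
  rewrite natr_sum -sum_const_fset big_seq [X in _ <= X]big_seq.
  apply: ler_sum => y yX.
  have := HX x xX; have := HX y yX; rewrite /Stab_r natrD; lra.
have H3 : (#|` S|)%:R * eps * n%:R * n%:R <= n%:R * n%:R * (2 * N).
  by apply: le_trans H1 (le_trans _ H2); rewrite ler_nat.
rewrite ler_pdivlMr // -(ler_pM2r npos) -(ler_pM2r npos).
by apply: (le_trans H3); rewrite mulrC mulrA.
Qed.
End Real.

Local Open Scope ring_scope.
Local Open Scope fset_scope.

Theorem lemma3p3 (R : realFieldType) (G : groupType) (A : {fset G}) (N eps : R) :
  0 < N -> 0 < eps < 1 ->
  (forall X : {fset G}, X != fset0 -> (forall x, x \in X -> Stab_r N A x) ->
     exists S : {fset G}, (forall g, g \in S <-> Z_l eps A X g) /\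
                          (#|` S|)%:R <= 2 * N / eps)
  /\
  (forall X : {fset G}, X != fset0 ->
     (forall x, x \in X -> St_r (eps ^+ 2 / 2) A x) ->
     exists S : {fset G}, (forall g, g \in S <-> Z_l eps A X g) /\
                          (#|` S|)%:R <= eps * (#|` A|)%:R).
Proof.
move=> _ /andP[eps0 _]; split => X X0 HX; first exact: main_gen.
have [S [HS HSc]] := @main_gen R G A (eps ^+ 2 / 2 * (#|` A|)%:R) eps X eps0 X0 HX.
exists S; split => //; apply: (le_trans HSc).
have -> : 2 * (eps ^+ 2 / 2 * (#|` A|)%:R) / eps = eps * (#|` A|)%:R.
  by field; rewrite gt_eqF.
by [].
Qed.
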